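(* Let $\gamma_\infty=\lim_{\epsilon\to+\infty}\gamma(\epsilon)=E\{Z_i\mid A_i=0,Y_i=1\}-E\{Z_i\mid A_i=1,Y_i=1\}$. If $\gamma_\infty\neq 0$ (i.e. the non-private algorithm $\mathscr{A}$ is not $0$-fair), then there exists $\hat\epsilon\in(0,+\infty)$ such that $|\gamma(\epsilon)|<|\gamma_\infty|$ for all $\epsilon\in(0,\hat\epsilon)$.
   Context: There are $n$ individuals indexed by $\mathcal{N}=\{1,\dots,n\}$. Individual $i$ is described by a random tuple $(X_i,A_i,Y_i)$, with features $X_i\in\mathcal{X}$, protected attribute $A_i\in\{0,1\}$ and qualification state $Y_i\in\{0,1\}$; the tuples are i.i.d. with a common distribution $\mathsf{F}$. A fixed function $r:\mathcal{X}\to\mathcal{R}$ is given, with $\mathcal{R}\subset[0,1]$ finite, and $R_i=r(X_i)$. Conditioning events $\{A_i=a,Y_i=1\}$ are assumed to have positive probability. For $\epsilon\ge0$, define $Z_{i,\epsilon}=\exp(\epsilon R_i/2)/\sum_{j=1}^n\exp(\epsilon R_j/2)$ (the probability that the exponential mechanism $\mathscr{A}_\epsilon$ selects $i$, given the scores) and $\gamma(\epsilon)=E\{Z_{i,\epsilon}\mid A_i=0,Y_i=1\}-E\{Z_{i,\epsilon}\mid A_i=1,Y_i=1\}$. Let $N_{\max}=|\{i: R_i=\max_j R_j\}|$ and $Z_i=0$ if $R_i\neq\max_jR_j$, $Z_i=1/N_{\max}$ otherwise; $E\{Z_i\}$ is the probability that the algorithm $\mathscr{A}$ selecting uniformly among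 individuals with the highest score selects $i$. The limit $\lim_{\epsilon\to+\infty}\gamma(\epsilon)$ exists and equals the stated difference of conditional expectations of $Z_i$. *)

(* Defs.v *)
From HB Require Import structures.
From mathcomp Require Import all_boot all_order all_algebra.
From mathcomp Require Import all_classical all_reals all_analysis.
Set Implicit Arguments. Unset Strict Implicit. Unset Printing Implicit Defensive.
Import Order.TTheory GRing.Theory Num.Theory.
Local Open Scope classical_set_scope.
Local Open Scope ring_scope.

Definition iid_family (R : realType) {dO} {Omega : measurableType dO}
  {dT} {T : measurableType dT} (P : probability Omega R) (n : nat)
  (V : 'I_n -> Omega -> T) : Prop :=
  (forall j, measurable_fun setT (V j)) /\
  (forall B : 'I_n -> set T, (forall j, measurable (B j)) ->
     fine (P (\bigcap_(j in [set: 'I_n]) (V j @^-1` B j)))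
     = \prod_(j < n) fine (P (V j @^-1` B j))) /\
  (forall j k (B : set T), measurable B ->
     P (V j @^-1` B) = P (V k @^-1` B)).

Definition cond_exp (R : realType) {dO} {Omega : measurableType dO}
  (P : probability Omega R) (W : Omega -> R) (B : set Omega) : R :=
  fine (\int[P]_(w in B) (W w)%:E) / fine (P B).

Definition Zeps (R : realType) {Omega : Type} (n : nat)
  (Rs : 'I_n -> Omega -> R) (eps : R) (i : 'I_n) (w : Omega) : R :=
  expR (eps * Rs i w / 2) / \sum_(j < n) expR (eps * Rs j w / 2).

(* Selection probability of the non-private algorithm choosing uniformly
   among the individuals with the highest score. *)
Definition is_top (R : realType) {Omega : Type} (n : nat)
  (Rs : 'I_n -> Omega -> R) (w : Omega) (i : 'I_n) : bool :=
  [forall k, Rs k w <= Rs i w].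

Definition Zmax (R : realType) {Omega : Type} (n : nat)
  (Rs : 'I_n -> Omega -> R) (i : 'I_n) (w : Omega) : R :=
  if is_top Rs w i then (#|[set j | is_top Rs w j]|%:R)^-1 else 0.

Definition grp {Omega : Type} {n : nat} (A Y : 'I_n -> Omega -> bool)
  (i : 'I_n) (a : bool) : set Omega :=
  [set w | A i w = a /\ Y i w = true].

(* gamma(eps) = E{Z_{i,eps} | A_i=0,Y_i=1} - E{Z_{i,eps} | A_i=1,Y_i=1}
   (A_i = 0 is encoded as false, A_i = 1 as true). *)
Definition gamma (R : realType) {dO} {Omega : measurableType dO}
  (P : probability Omega R) (n : nat) (Rs : 'I_n -> Omega -> R)
  (A Y : 'I_n -> Omega -> bool) (i : 'I_n) (eps : R) : R :=
  cond_exp P (Zeps Rs eps i) (grp A Y i false)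
  - cond_exp P (Zeps Rs eps i) (grp A Y i true).

Definition gamma_inf (R : realType) {dO} {Omega : measurableType dO}
  (P : probability Omega R) (n : nat) (Rs : 'I_n -> Omega -> R)
  (A Y : 'I_n -> Omega -> bool) (i : 'I_n) : R :=
  cond_exp P (Zmax Rs i) (grp A Y i false)
  - cond_exp P (Zmax Rs i) (grp A Y i true).

(* Main.v *)
Require Import Defs.
From HB Require Import structures.
From mathcomp Require Import all_boot all_order all_algebra.
From mathcomp Require Import all_classical all_reals all_analysis.
Import Order.TTheory GRing.Theory Num.Theory.
Local Open Scope classical_set_scope.
Local Open Scope ring_scope.
From mathcomp Require Import ring lra.

Lemma cond_bounds (R : realType) dO (Omega : measurableType dO)
  (P : probability Omega R) (W : Omega -> R) (B : set Omega) (lo hi : R) :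
  measurable B -> (0 < P B)%E -> measurable_fun setT W ->
  0 <= lo -> (forall w, lo <= W w <= hi) ->
  lo <= cond_exp P W B <= hi.
Proof.
move=> mB PB0 mW lo0 hW.
have PBfin : P B \is a fin_num.
  by rewrite ge0_fin_numE // (le_lt_trans (probability_le1 P mB)) ?ltry.
have L : (lo%:E * P B <= \int[P]_(w in B) (W w)%:E)%E.
  rewrite -(integral_cst P mB lo%:E); apply: ge0_le_integral => //.
  all: try by move=> x _; rewrite /= lee_fin; case/andP: (hW x).
  by apply/measurable_realfun.measurable_EFinP; exact: measurable_funTS.
have U : (\int[P]_(w in B) (W w)%:E <= hi%:E * P B)%E.
  rewrite -(integral_cst P mB hi%:E); apply: ge0_le_integral => //.
  all: try by move=> x _; rewrite /= lee_fin; case/andP: (hW x) => a b; rewrite ?b ?(le_trans lo0 a).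
  by apply/measurable_realfun.measurable_EFinP; exact: measurable_funTS.
have Ifin : (\int[P]_(w in B) (W w)%:E)%E \is a fin_num.
  rewrite fin_numE; apply/andP; split.
  - apply/negP => /eqP E; move: L; rewrite E leeNy_eq.
    by rewrite -(fineK PBfin) -EFinM.
  - apply/negP => /eqP E; move: U; rewrite E leye_eq.
    by rewrite -(fineK PBfin) -EFinM.
have pB : 0 < fine (P B).
  by rewrite -lte_fin fineK.
rewrite /cond_exp.
move: L U; rewrite -(fineK PBfin) -(fineK Ifin) -!EFinM !lee_fin => L U.
by rewrite ler_pdivlMr // ler_pdivrMr // L U.
Qed.

Theorem theorem3 (R : realType) (dO : measure_display)
  (Omega : measurableType dO) (P : probability Omega R)
  (dX : measure_display) (Xsp : measurableType dX)
  (n : nat) (X : 'I_n -> Omega -> Xsp) (A Y : 'I_n -> Omega -> bool)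
  (r : Xsp -> R) (i : 'I_n) :
  measurable_fun setT r ->
  finite_set (range r) ->
  (forall x, 0 <= r x <= 1) ->
  iid_family P (fun j w => (X j w, A j w, Y j w)) ->
  (forall a : bool, (0 < P (grp A Y i a))%E) ->
  let Rs := fun j w => r (X j w) in
  gamma_inf P Rs A Y i != 0 ->
  exists2 eps_hat : R, 0 < eps_hat &
    forall eps : R, 0 < eps < eps_hat ->
      `|gamma P Rs A Y i eps| < `|gamma_inf P Rs A Y i|.
Proof.
move=> mr _ r01 [mV _] PB Rs g0.
have mR : forall j, measurable_fun setT (Rs j).
  move=> j; apply: measurableT_comp mr _.
  exact: (measurableT_comp measurable_fst (measurableT_comp measurable_fst (mV j))).
have mA : measurable_fun setT (A i).
  exact: (measurableT_comp measurable_snd (measurableT_comp measurable_fst (mV i))).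
have mY : measurable_fun setT (Y i).
  exact: (measurableT_comp measurable_snd (mV i)).
have mB : forall a, measurable (grp A Y i a).
  move=> a; rewrite (_ : grp A Y i a = A i @^-1` [set a] `&` Y i @^-1` [set true]).
    apply: measurableI.
      by have := mA measurableT [set a] I; rewrite setTI.
    by have := mY measurableT [set true] I; rewrite setTI.
  by apply/seteqP; split => w /=.
have n0 : (0 < n)%N by apply: leq_ltn_trans (ltn_ord i).
have N1 : 1 <= n%:R :> R by rewrite ler1n.
have Spos : forall eps w, 0 < \sum_(j < n) expR (eps * Rs j w / 2).
  move=> eps w; rewrite (bigD1 i) //= ltr_pwDl ?expR_gt0 //.
  by apply: sumr_ge0 => j _; exact: expR_ge0.
have mZ : forall eps, measurable_fun setT (Zeps Rs eps i).
  move=> eps.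
  have mE : forall j, measurable_fun setT (fun w => expR (eps * Rs j w / 2)).
    move=> j; exact: (measurableT_comp (@measurable_realfun.measurable_expR R)
      (measurable_realfun.measurable_funM (measurable_realfun.measurable_funM
         (measurable_cst eps) (mR j)) (measurable_cst (2^-1 : R)))).
  rewrite (_ : Zeps Rs eps i = fun w => expR (eps * Rs i w / 2) *
      expR (- ln (\sum_(j < n) expR (eps * Rs j w / 2)))).
    apply: measurable_realfun.measurable_funM => //.
    exact: (measurableT_comp (@measurable_realfun.measurable_expR R)
      (measurableT_comp (@measurable_realfun.oppr_measurable R _)
      (measurableT_comp (@measurable_realfun.measurable_ln R) (measurable_sum _ mE)))).
  apply/funext => w; rewrite /Zeps expRN lnK //; exact: Spos.
have Zb : forall eps, 0 < eps -> forall w,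
    (n%:R * expR (eps / 2))^-1 <= Zeps Rs eps i w <= expR (eps / 2) / n%:R.
  move=> eps ep w; set E := expR (eps / 2).
  have E1 : 1 <= E. by rewrite /E -[X in X <= _]expR0 ler_expR; lra.
  have ab : forall j, 1 <= expR (eps * Rs j w / 2) <= E.
    move=> j; have /andP[r0 r1] := r01 (X j w).
    rewrite /E -[X in X <= _ <= _]expR0 !ler_expR /Rs; apply/andP; split; nra.
  set S := \sum_(j < n) expR (eps * Rs j w / 2).
  have S1 : n%:R <= S.
    rewrite (_ : n%:R = \sum_(j < n) (1:R)); last by rewrite sumr_const card_ord.
    by apply: ler_sum => j _; case/andP: (ab j).
  have S2 : S <= n%:R * E.
    rewrite mulr_natl -[n in E *+ n]card_ord -sumr_const.
    by apply: ler_sum => j _; case/andP: (ab j).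
  have Sp : 0 < S by exact: Spos.
  have /andP[a1 a2] := ab i.
  rewrite /Zeps -/S; apply/andP; split.
    rewrite ler_pdivlMr //.
    have NE : 0 < n%:R * E by nra.
    have K : (n%:R * E)^-1 * (n%:R * E) = 1 by rewrite mulVf //; lra.
    have L0 : 0 <= (n%:R * E)^-1 by rewrite invr_ge0; lra.
    have := ler_wpM2l L0 S2; lra.
  rewrite ler_pdivrMr //.
  have H : E / n%:R * n%:R = E by rewrite mulfVK //; lra.
  have H0 : 0 <= E / n%:R by apply: divr_ge0; lra.
  nra.
set g := `|gamma_inf P Rs A Y i|.
have gp : 0 < g by rewrite normr_gt0.
exists (ln (1 + g)); first by apply: ln_gt0; lra.
move=> eps /andP[ep epl].
set E := expR (eps / 2).
have E1 : 1 <= E by rewrite /E -[X in X <= _]expR0 ler_expR; lra.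
have lo0 : 0 <= (n%:R * E)^-1 by rewrite invr_ge0; nra.
have /andP[c0 c0'] := @cond_bounds _ _ _ P _ _ _ _ (mB false) (PB false) (mZ eps) lo0 (Zb eps ep).
have /andP[c1 c1'] := @cond_bounds _ _ _ P _ _ _ _ (mB true) (PB true) (mZ eps) lo0 (Zb eps ep).
have EE : expR eps = E * E by rewrite /E -expRD; congr expR; lra.
have el : expR eps < 1 + g.
  by rewrite -[X in _ < X]lnK ?ltr_expR // posrE; lra.
have hl : E / n%:R - (n%:R * E)^-1 <= E * E - 1.
  have -> : E / n%:R - (n%:R * E)^-1 = (E * E - 1) / (n%:R * E).
    by field; apply/andP; split; apply/eqP; lra.
  rewrite ler_pdivrMr; last by nra.
  have h1 : 0 <= E * E - 1 by nra.
  have h2 : 0 <= n%:R * E - 1 by nra.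
  have := mulr_ge0 h1 h2; lra.
rewrite /gamma; apply: le_lt_trans (_ : E / n%:R - (n%:R * E)^-1 < g).
  move: c0' c1'; rewrite -/E => c0' c1'.
  rewrite ler_norml; apply/andP; split; lra.
lra.
Qed.
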